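(* Let $F$ be a field. Every Hurwitz $F$-algebra whose norm is anisotropic is reversible. A split Hurwitz $F$-algebra (i.e. one whose norm is isotropic) is reversible if and only if its dimension is at most $2$.
   Context: An $F$-algebra is a vector space with a bilinear (not necessarily associative) multiplication; all algebras are unital. For a quadratic form $q:V\to F$, let $\langle x,y\rangle=q(x+y)-q(x)-q(y)$ and $V^\perp=\{x\in V:\langle x,V\rangle=0\}$; $q$ is non-degenerate if either $V^\perp=0$, or $\dim V^\perp=1$ and $q(V^\perp)\neq 0$. $q$ is anisotropic if $q(x)\ne 0$ for all nonzero $x$, isotropic otherwise. A Hurwitz algebra is a unital $F$-algebra $A$ with a non-degenerate quadratic form $n:A\to F$ (its norm) satisfying $n(ab)=n(a)n(b)$ for all $a,b\in A$; it is split if $n$ is isotropic. An algebra $A$ is reversible if $ab=0$ implies $ba=0$ for all $a,b\in A$. *)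

(* Defs.v *)
From HB Require Import structures.
From mathcomp Require Import all_boot all_order all_algebra.
Set Implicit Arguments. Unset Strict Implicit. Unset Printing Implicit Defensive.
Import GRing.Theory.
Local Open Scope ring_scope.

(* A (not necessarily associative) F-algebra structure on an F-vector space V
   is given by a bilinear multiplication [m : V -> V -> V]. *)
Definition bilinear_mul (F : fieldType) (V : lmodType F) (m : V -> V -> V) : Prop :=
  (forall (a : F) (x y z : V), m (a *: x + y) z = a *: m x z + m y z) /\
  (forall (a : F) (x y z : V), m z (a *: x + y) = a *: m z x + m z y).

Definition is_unit_elt (F : fieldType) (V : lmodType F) (m : V -> V -> V) (e : V) : Prop :=
  forall x : V, m e x = x /\ m x e = x.

Definition polar (F : fieldType) (V : lmodType F) (q : V -> F) (x y : V) : F :=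
  q (x + y) - q x - q y.

(* q is a quadratic form: q(a x) = a^2 q(x) and its polar form is bilinear
   (linearity in the second argument follows from symmetry). *)
Definition quadratic_form (F : fieldType) (V : lmodType F) (q : V -> F) : Prop :=
  (forall (a : F) (x : V), q (a *: x) = a ^+ 2 * q x) /\
  (forall (a : F) (x y z : V), polar q (a *: x + y) z = a * polar q x z + polar q y z).

Definition in_radical (F : fieldType) (V : lmodType F) (q : V -> F) (x : V) : Prop :=
  forall y : V, polar q x y = 0.

Definition nondegenerate (F : fieldType) (V : lmodType F) (q : V -> F) : Prop :=
  (forall x : V, in_radical q x -> x = 0) \/
  ((exists v : V, v != 0 /\ in_radical q v /\
      (forall w : V, in_radical q w -> exists c : F, w = c *: v)) /\
   (exists w : V, in_radical q w /\ q w != 0)).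

Definition anisotropic (F : fieldType) (V : lmodType F) (q : V -> F) : Prop :=
  forall x : V, x != 0 -> q x != 0.

Definition isotropic (F : fieldType) (V : lmodType F) (q : V -> F) : Prop :=
  exists x : V, x != 0 /\ q x = 0.

Definition hurwitz (F : fieldType) (V : lmodType F) (m : V -> V -> V) (e : V)
    (n : V -> F) : Prop :=
  [/\ bilinear_mul m, is_unit_elt m e, quadratic_form n, nondegenerate n
    & forall a b : V, n (m a b) = n a * n b].

Definition reversible (F : fieldType) (V : lmodType F) (m : V -> V -> V) : Prop :=
  forall a b : V, m a b = 0 -> m b a = 0.

Definition dim_le (F : fieldType) (V : lmodType F) (k : nat) : Prop :=
  exists v : 'I_k -> V, forall x : V, exists c : 'I_k -> F, x = \sum_(i < k) c i *: v i.

(* Main.v *)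
Require Import Defs.
From mathcomp Require Import all_boot all_order all_algebra ring.
From Stdlib Require Import Classical_Prop.
Set Implicit Arguments. Unset Strict Implicit. Unset Printing Implicit Defensive.
Import GRing.Theory.
Local Open Scope ring_scope.

Lemma m_0l (F : fieldType) (V : lmodType F) (m : V -> V -> V) :
  bilinear_mul m -> forall z, m 0 z = 0.
Proof.
move=> [hl _] z; have := hl (-1) 0 0 z.
by rewrite scaler0 addr0 scaleN1r addNr.
Qed.

Lemma m_0r (F : fieldType) (V : lmodType F) (m : V -> V -> V) :
  bilinear_mul m -> forall z, m z 0 = 0.
Proof.
move=> [_ hr] z; have := hr (-1) 0 0 z.
by rewrite scaler0 addr0 scaleN1r addNr.
Qed.

Lemma m_Dl (F : fieldType) (V : lmodType F) (m : V -> V -> V) :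
  bilinear_mul m -> forall x y z, m (x + y) z = m x z + m y z.
Proof. by move=> [hl _] x y z; have := hl 1 x y z; rewrite !scale1r. Qed.

Lemma m_Dr (F : fieldType) (V : lmodType F) (m : V -> V -> V) :
  bilinear_mul m -> forall x y z, m z (x + y) = m z x + m z y.
Proof. by move=> [_ hr] x y z; have := hr 1 x y z; rewrite !scale1r. Qed.

Lemma m_Zl (F : fieldType) (V : lmodType F) (m : V -> V -> V) :
  bilinear_mul m -> forall a x z, m (a *: x) z = a *: m x z.
Proof.
move=> hm a x z; have := hm.1 a x 0 z.
by rewrite !addr0 (m_0l hm) addr0.
Qed.

Lemma m_Zr (F : fieldType) (V : lmodType F) (m : V -> V -> V) :
  bilinear_mul m -> forall a x z, m z (a *: x) = a *: m z x.
Proof.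
move=> hm a x z; have := hm.2 a x 0 z.
by rewrite !addr0 (m_0r hm) addr0.
Qed.

Lemma m_Nl (F : fieldType) (V : lmodType F) (m : V -> V -> V) :
  bilinear_mul m -> forall x z, m (- x) z = - m x z.
Proof. by move=> hm x z; rewrite -scaleN1r (m_Zl hm) scaleN1r. Qed.

Lemma m_Nr (F : fieldType) (V : lmodType F) (m : V -> V -> V) :
  bilinear_mul m -> forall x z, m z (- x) = - m z x.
Proof. by move=> hm x z; rewrite -scaleN1r (m_Zr hm) scaleN1r. Qed.

Lemma m_Bl (F : fieldType) (V : lmodType F) (m : V -> V -> V) :
  bilinear_mul m -> forall x y z, m (x - y) z = m x z - m y z.
Proof. by move=> hm x y z; rewrite (m_Dl hm) (m_Nl hm). Qed.

Lemma m_Br (F : fieldType) (V : lmodType F) (m : V -> V -> V) :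
  bilinear_mul m -> forall x y z, m z (x - y) = m z x - m z y.
Proof. by move=> hm x y z; rewrite (m_Dr hm) (m_Nr hm). Qed.

Lemma q_0 (F : fieldType) (V : lmodType F) (q : V -> F) :
  quadratic_form q -> q 0 = 0.
Proof. by move=> [hz _]; have := hz 0 0; rewrite scale0r expr0n /= mul0r. Qed.

Lemma p_C (F : fieldType) (V : lmodType F) (q : V -> F) x y :
  polar q x y = polar q y x.
Proof. rewrite /polar [y + x]addrC; ring. Qed.

Lemma p_Dl (F : fieldType) (V : lmodType F) (q : V -> F) :
  quadratic_form q -> forall x y z, polar q (x + y) z = polar q x z + polar q y z.
Proof. by move=> [_ hp] x y z; have := hp 1 x y z; rewrite scale1r mul1r. Qed.

Lemma p_Dr (F : fieldType) (V : lmodType F) (q : V -> F) :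
  quadratic_form q -> forall x y z, polar q z (x + y) = polar q z x + polar q z y.
Proof. by move=> hq x y z; rewrite p_C (p_Dl hq) !(p_C _ z). Qed.

Lemma p_0l (F : fieldType) (V : lmodType F) (q : V -> F) :
  quadratic_form q -> forall z, polar q 0 z = 0.
Proof. by move=> hq z; rewrite /polar add0r (q_0 hq) subr0 subrr. Qed.

Lemma p_Zl (F : fieldType) (V : lmodType F) (q : V -> F) :
  quadratic_form q -> forall a x z, polar q (a *: x) z = a * polar q x z.
Proof.
move=> hq a x z; have := hq.2 a x 0 z.
by rewrite addr0 (p_0l hq) addr0.
Qed.

Lemma p_Zr (F : fieldType) (V : lmodType F) (q : V -> F) :
  quadratic_form q -> forall a x z, polar q z (a *: x) = a * polar q z x.
Proof. by move=> hq a x z; rewrite p_C (p_Zl hq) p_C. Qed.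

Lemma p_Nl (F : fieldType) (V : lmodType F) (q : V -> F) :
  quadratic_form q -> forall x z, polar q (- x) z = - polar q x z.
Proof. by move=> hq x z; rewrite -scaleN1r (p_Zl hq) mulN1r. Qed.

Lemma p_Nr (F : fieldType) (V : lmodType F) (q : V -> F) :
  quadratic_form q -> forall x z, polar q z (- x) = - polar q z x.
Proof. by move=> hq x z; rewrite p_C (p_Nl hq) p_C. Qed.

Lemma q_D (F : fieldType) (V : lmodType F) (q : V -> F) x y :
  q (x + y) = q x + q y + polar q x y.
Proof. rewrite /polar; ring. Qed.

Lemma q_Z (F : fieldType) (V : lmodType F) (q : V -> F) :
  quadratic_form q -> forall a x, q (a *: x) = a ^+ 2 * q x.
Proof. by move=> [hz _]. Qed.

Lemma q_N (F : fieldType) (V : lmodType F) (q : V -> F) :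
  quadratic_form q -> forall x, q (- x) = q x.
Proof. by move=> hq x; rewrite -scaleN1r (q_Z hq) sqrrN expr1n mul1r. Qed.

Lemma p_xx (F : fieldType) (V : lmodType F) (q : V -> F) :
  quadratic_form q -> forall x, polar q x x = 2 * q x.
Proof.
move=> hq x; rewrite /polar -mulr2n -scaler_nat (q_Z hq); ring.
Qed.

Lemma id1 (F : fieldType) (V : lmodType F) (m : V -> V -> V) (n : V -> F) :
  bilinear_mul m -> (forall a b, n (m a b) = n a * n b) ->
  forall a b c, polar n (m a b) (m a c) = n a * polar n b c.
Proof.
move=> hm hmul a b c; rewrite {1}/polar -(m_Dr hm) !hmul /polar; ring.
Qed.

Lemma id2 (F : fieldType) (V : lmodType F) (m : V -> V -> V) (n : V -> F) :
  bilinear_mul m -> (forall a b, n (m a b) = n a * n b) ->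
  forall a b c, polar n (m a c) (m b c) = polar n a b * n c.
Proof.
move=> hm hmul a b c; rewrite {1}/polar -(m_Dl hm) !hmul /polar; ring.
Qed.

Lemma id3 (F : fieldType) (V : lmodType F) (m : V -> V -> V) (n : V -> F) :
  bilinear_mul m -> quadratic_form n -> (forall a b, n (m a b) = n a * n b) ->
  forall a b c d, polar n (m a b) (m c d) + polar n (m a d) (m c b)
                  = polar n a c * polar n b d.
Proof.
move=> hm hq hmul a b c d.
have := id1 hm hmul (a + c) b d.
rewrite !(m_Dl hm) !(p_Dl hq) !(p_Dr hq) !(id1 hm hmul) q_D.
rewrite (p_C _ (m c b)) => H.
apply/eqP; rewrite -subr_eq0; apply/eqP.
have E : forall u v : F, u = v -> u - v = 0 by move=> u v ->; rewrite subrr.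
rewrite -(E _ _ H); ring.
Qed.

Lemma rad0 (F : fieldType) (V : lmodType F) (n : V -> F) :
  quadratic_form n -> Defs.nondegenerate n ->
  forall w, in_radical n w -> n w = 0 -> w = 0.
Proof.
move=> hq [h1|[[v [vn0 [rv hv]]] [w0 [rw0 nw0]]]] w rw nw; first exact: h1.
have [c0 e0] := hv _ rw0.
have nv : n v != 0.
  by apply: contraNneq nw0 => nv0; rewrite e0 (q_Z hq) nv0 mulr0.
have [c ec] := hv _ rw.
move: nw; rewrite ec (q_Z hq) => /eqP; rewrite mulf_eq0 (negbTE nv) orbF sqrf_eq0.
by move=> /eqP ->; rewrite scale0r.
Qed.

Lemma EQ (F : fieldType) (V : lmodType F) (n : V -> F) :
  quadratic_form n -> Defs.nondegenerate n ->
  forall u v, (forall x, polar n u x = polar n v x) -> n u = n v -> u = v.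
Proof.
move=> hq hn u v hp hnn; apply/eqP; rewrite -subr_eq0; apply/eqP.
apply: (rad0 hq hn).
  by move=> x; rewrite (p_Dl hq) (p_Nl hq) hp subrr.
rewrite q_D (q_N hq) (p_Nr hq) hp (p_xx hq) hnn; ring.
Qed.

Lemma ne1 (F : fieldType) (V : lmodType F) (m : V -> V -> V) (e : V) (n : V -> F) :
  hurwitz m e n -> (exists x : V, x != 0) -> n e = 1.
Proof.
move=> [hm he hq hn hmul] [x x0].
have E : n e = n e * n e by rewrite -hmul (he e).1.
have [ne0|nen0] := eqVneq (n e) 0.
  have nz : forall a, n a = 0 by move=> a; rewrite -(he a).2 hmul ne0 mulr0.
  exfalso; move/eqP: x0; apply; apply: (rad0 hq hn) => //.
  by move=> y; rewrite /polar !nz !subrr.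
by apply: (mulfI nen0); rewrite mulr1 -E.
Qed.

Lemma subr0_of (F : fieldType) (u v : F) : u = v -> u - v = 0.
Proof. by move=> ->; rewrite subrr. Qed.

Ltac lin H := apply/eqP; rewrite -subr_eq0; apply/eqP;
  first [ rewrite -(subr0_of H); ring | rewrite -oppr0 -(subr0_of H); ring ].

Lemma Qa (F : fieldType) (V : lmodType F) (m : V -> V -> V) (e : V) (n : V -> F) :
  hurwitz m e n -> n e = 1 ->
  forall a, m a a = polar n a e *: a - n a *: e.
Proof.
move=> [hm he hq hn hmul] hne a; apply: (EQ hq hn).
  move=> x.
  have H := id3 hm hq hmul a a e x.
  rewrite (he x).1 (he a).1 in H.
  have H2 := id1 hm hmul a x e; rewrite (he a).2 in H2.
  rewrite H2 in H.
  rewrite (p_Dl hq) (p_Nl hq) !(p_Zl hq) (p_C _ e x).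
  lin H.
rewrite hmul q_D (q_N hq) !(q_Z hq) (p_Nr hq) (p_Zl hq) (p_Zr hq) hne; ring.
Qed.

Definition phi3 (F : fieldType) (M : lmodType F) (u v w : M) (x y z : F) :=
  x *: u + y *: v + z *: w.

Lemma phi3D (F : fieldType) (M : lmodType F) (u v w : M) x y z x' y' z' :
  phi3 u v w x y z + phi3 u v w x' y' z' = phi3 u v w (x + x') (y + y') (z + z').
Proof.
rewrite /phi3 !scalerDl addrACA; congr (_ + _); exact: addrACA.
Qed.

Lemma phi3N (F : fieldType) (M : lmodType F) (u v w : M) x y z :
  - phi3 u v w x y z = phi3 u v w (- x) (- y) (- z).
Proof. by rewrite /phi3 !opprD -!scaleNr. Qed.

Lemma phi3Z (F : fieldType) (M : lmodType F) (u v w : M) k x y z :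
  k *: phi3 u v w x y z = phi3 u v w (k * x) (k * y) (k * z).
Proof. by rewrite /phi3 !scalerDr !scalerA. Qed.

Lemma phi3_1 (F : fieldType) (M : lmodType F) (u v w : M) k :
  k *: u = phi3 u v w k 0 0.
Proof. by rewrite /phi3 !scale0r !addr0. Qed.
Lemma phi3_2 (F : fieldType) (M : lmodType F) (u v w : M) k :
  k *: v = phi3 u v w 0 k 0.
Proof. by rewrite /phi3 !scale0r add0r addr0. Qed.
Lemma phi3_3 (F : fieldType) (M : lmodType F) (u v w : M) k :
  k *: w = phi3 u v w 0 0 k.
Proof. by rewrite /phi3 !scale0r !add0r. Qed.

Ltac vec3 a b e :=
  rewrite ?(phi3_1 a b e) ?(phi3_2 a b e) ?(phi3_3 a b e) ?(phi3Z, phi3N, phi3D);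
  congr phi3; ring.

Lemma PQ_alg (F : fieldType) (M : lmodType F) (a b e X : M) (ta tb na nb p : F) :
  ta *: a - na *: e + (tb *: b - nb *: e) + X
    = (ta + tb) *: (a + b) - (na + nb + p) *: e ->
  X = ta *: b + tb *: a - p *: e.
Proof.
move/(canRL (addKr _)) => ->.
rewrite !scalerDr.
vec3 a b e.
Qed.

Lemma PQ (F : fieldType) (V : lmodType F) (m : V -> V -> V) (e : V) (n : V -> F) :
  hurwitz m e n -> n e = 1 ->
  forall a b, m a b + m b a = polar n a e *: b + polar n b e *: a - polar n a b *: e.
Proof.
move=> H hne a b; have Q := Qa H hne; case: H => hm he hq hn hmul.
have := Q (a + b).
rewrite !(m_Dl hm) !(m_Dr hm) Q (Q b) (p_Dl hq) q_D.
rewrite [m b a + _]addrC addrACA.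
exact: PQ_alg.
Qed.

Lemma id4 (F : fieldType) (V : lmodType F) (m : V -> V -> V) (n : V -> F) :
  bilinear_mul m -> quadratic_form n -> (forall a b, n (m a b) = n a * n b) ->
  forall a b c d, polar n (m a c) (m b d) + polar n (m a d) (m b c)
                  = polar n a b * polar n c d.
Proof.
move=> hm hq hmul a b c d.
have := id2 hm hmul a b (c + d).
rewrite !(m_Dr hm) !(p_Dl hq) !(p_Dr hq) !(id2 hm hmul) q_D.
rewrite (p_C _ (m a d)) => H.
lin H.
Qed.

Lemma nbar (F : fieldType) (V : lmodType F) (e : V) (n : V -> F) :
  quadratic_form n -> n e = 1 -> forall a,
  n (polar n a e *: e - a) = n a.
Proof.
move=> hq hne a; rewrite q_D (q_N hq) (q_Z hq) (p_Nr hq) (p_Zl hq) hne (p_C _ e a).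
ring.
Qed.

Lemma Lmoufang (F : fieldType) (V : lmodType F) (m : V -> V -> V) (e : V) (n : V -> F) :
  hurwitz m e n -> n e = 1 ->
  forall a b, m (polar n a e *: e - a) (m a b) = n a *: b.
Proof.
move=> [hm he hq hn hmul] hne a b; apply: (EQ hq hn).
  move=> x.
  have H := id3 hm hq hmul a (m a b) e x.
  rewrite (he x).1 (he (m a b)).1 in H.
  have H2 := id1 hm hmul a x b; rewrite H2 in H.
  rewrite (m_Bl hm) (m_Zl hm) (he _).1 (p_Dl hq) (p_Nl hq) !(p_Zl hq); rewrite (p_C _ x b) in H.
  lin H.
rewrite !hmul (nbar hq hne) (q_Z hq); ring.
Qed.

Lemma Rmoufang (F : fieldType) (V : lmodType F) (m : V -> V -> V) (e : V) (n : V -> F) :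
  hurwitz m e n -> n e = 1 ->
  forall a b, m (m b a) (polar n a e *: e - a) = n a *: b.
Proof.
move=> [hm he hq hn hmul] hne a b; apply: (EQ hq hn).
  move=> x.
  have H := id4 hm hq hmul (m b a) x a e.
  rewrite (he x).2 (he (m b a)).2 in H.
  have H2 := id2 hm hmul b x a; rewrite H2 in H.
  rewrite (m_Br hm) (m_Zr hm) (he _).2 (p_Dl hq) (p_Nl hq) !(p_Zl hq).
  lin H.
rewrite !hmul (nbar hq hne) (q_Z hq); ring.
Qed.

Lemma solveb (F : fieldType) (M : lmodType F) (x y z : M) : x = y + z -> y = x - z.
Proof. by move=> ->; rewrite addrK. Qed.

Lemma sum2 (F : fieldType) (V : lmodType F) (c : 'I_2 -> F) (v : 'I_2 -> V) :
  \sum_(i < 2) c i *: v i = c ord0 *: v ord0 + c (lift ord0 ord0) *: v (lift ord0 ord0).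
Proof. by rewrite big_ord_recl big_ord1. Qed.

Lemma exists_f (F : fieldType) (V : lmodType F) (m : V -> V -> V) (e : V) (n : V -> F) :
  hurwitz m e n -> isotropic n -> exists f, n f = 0 /\ polar n f e = 1.
Proof.
move=> H [x [x0 nx]].
have hne : n e = 1 by apply: (ne1 H); exists x.
case: H => hm he hq hn hmul.
suff [z [nz tz]] : exists z, n z = 0 /\ polar n z e != 0.
  exists ((polar n z e)^-1 *: z); split.
    by rewrite (q_Z hq) nz mulr0.
  by rewrite (p_Zl hq) mulVf.
have [tx0|tx] := eqVneq (polar n x e) 0; last by exists x.
have [y py] : exists y, polar n x y != 0.
  apply: NNPP => hne'.
  move/eqP: x0; apply; apply: (rad0 hq hn) => // y.
  have [//|hy] := eqVneq (polar n x y) 0.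
  by exfalso; apply: hne'; exists y.
exists (m x y); split; first by rewrite hmul nx mul0r.
have := id3 hm hq hmul x y e e.
rewrite (he e).1 (he x).2 (he y).1 tx0 mul0r => /eqP.
by rewrite addr_eq0 => /eqP ->; rewrite oppr_eq0.
Qed.

Lemma rev_dim (F : fieldType) (V : lmodType F) (m : V -> V -> V) (e : V) (n : V -> F) :
  hurwitz m e n -> isotropic n -> reversible m -> dim_le V 2.
Proof.
move=> H hiso hrev.
have [f [nf tf]] := exists_f H hiso.
have hne : n e = 1.
  by case: hiso => x [x0 _]; apply: (ne1 H); exists x.
have L := Lmoufang H hne; have R := Rmoufang H hne; have P := PQ H hne.
case: H => hm he hq hn hmul.
have he1 : forall z, m e z = z by move=> z; case: (he z).
have he2 : forall z, m z e = z by move=> z; case: (he z).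
have tg : polar n (e - f) e = 1.
  by rewrite (p_Dl hq) (p_Nl hq) (p_xx hq) hne tf; ring.
have ng : n (e - f) = 0.
  by rewrite q_D (q_N hq) (p_Nr hq) (p_C _ e f) tf nf hne; ring.
have ef : 1 *: e - (e - f) = f by rewrite scale1r opprB addrC subrK.
have i1 : forall b, m b f = m (m f b) f.
  move=> b; have := L (e - f) b; rewrite tg ng scale0r ef => /hrev.
  rewrite (m_Bl hm) he1 (m_Bl hm) => /eqP; rewrite subr_eq0 => /eqP.
  done.
have i3 : forall b, m f b = m (m f b) f.
  move=> b; have := L f b; rewrite tf nf scale0r scale1r => /hrev.
  rewrite (m_Br hm) he2 => /eqP; rewrite subr_eq0 => /eqP.
  done.
have i4 : forall b, m f b = m f (m b f).
  move=> b; have := R (e - f) b; rewrite tg ng scale0r ef => /hrev.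
  rewrite (m_Br hm) he2 (m_Br hm) => /eqP; rewrite subr_eq0 => /eqP.
  done.
have comm : forall b, m b f = m f b by move=> b; rewrite i1 -i3.
have ffb : forall b, m f (m f b) = m f b by move=> b; rewrite [RHS]i4 comm.
have hc : forall b, m f b = polar n (m f b) e *: f - polar n f (m f b) *: e.
  move=> b; have := P f (m f b).
  rewrite tf scale1r comm !ffb -addrA; exact: addrI.
exists (fun i : 'I_2 => if val i == 0%N then e else f) => b.
pose tc := polar n (m f b) e; pose pc := polar n f (m f b).
exists (fun i : 'I_2 => if val i == 0%N then polar n f b - 2 * pc
                         else 2 * tc - polar n b e).
rewrite sum2 /=.
have := P f b; rewrite tf scale1r comm -addrA => /solveb hb.
rewrite {1}hb hc -/tc -/pc.
vec3 e f e.
Qed.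

Lemma span_comm (F : fieldType) (V : lmodType F) (m : V -> V -> V) (e w : V) :
  bilinear_mul m -> is_unit_elt m e ->
  (forall x, exists p q, x = p *: e + q *: w) -> forall x y, m x y = m y x.
Proof.
move=> hm he hs x y.
have he1 : forall z, m e z = z by move=> z; case: (he z).
have he2 : forall z, m z e = z by move=> z; case: (he z).
have [p [q ->]] := hs x; have [r [s ->]] := hs y.
rewrite !(m_Dl hm) !(m_Dr hm) !(m_Zl hm) !(m_Zr hm) !he1 !he2.
vec3 e w (m w w).
Qed.

Lemma dim_comm (F : fieldType) (V : lmodType F) (m : V -> V -> V) (e : V) :
  bilinear_mul m -> is_unit_elt m e -> e != 0 -> dim_le V 2 ->
  forall x y, m x y = m y x.
Proof.
move=> hm he e0 [v hv].
have [c hc] := hv e; rewrite sum2 in hc.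
set v0 := v ord0 in hc; set v1 := v (lift ord0 ord0) in hc.
set c0 := c ord0 in hc; set c1 := c (lift ord0 ord0) in hc.
have hv' : forall x, exists d0 d1, x = d0 *: v0 + d1 *: v1.
  by move=> x; have [d hd] := hv x; rewrite sum2 in hd; eexists; eexists; exact: hd.
have [c00|c0n] := eqVneq c0 0.
  have c1n : c1 != 0.
    by apply: contraNneq e0 => c10; rewrite hc c00 c10 !scale0r addr0.
  apply: (span_comm hm he (w := v0)) => x.
  have [d0 [d1 ->]] := hv' x.
  exists (d1 / c1); exists d0; rewrite hc c00.
  rewrite ?(phi3_1 v0 v1 v1) ?(phi3_2 v0 v1 v1) ?(phi3Z, phi3N, phi3D).
  by congr phi3; field.
apply: (span_comm hm he (w := v1)) => x.
have [d0 [d1 ->]] := hv' x.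
exists (d0 / c0); exists (d1 - d0 / c0 * c1); rewrite hc.
rewrite ?(phi3_1 v0 v1 v1) ?(phi3_2 v0 v1 v1) ?(phi3Z, phi3N, phi3D).
by congr phi3; field.
Qed.

Theorem proposition4p2 (F : fieldType) (V : lmodType F) (m : V -> V -> V) (e : V)
    (n : V -> F) :
  hurwitz m e n ->
  (anisotropic n -> reversible m) /\
  (isotropic n -> (reversible m <-> dim_le V 2)).
Proof.
move=> H; have H' := H; case: H' => hm he hq hn hmul; split.
  move=> han a b hab.
  have : n a * n b = 0 by rewrite -hmul hab (q_0 hq).
  move/eqP; rewrite mulf_eq0 => /orP [] hz.
    have [->|a0] := eqVneq a 0; first exact: (m_0r hm).
    by move: (han a a0); rewrite hz.
  have [->|b0] := eqVneq b 0; first exact: (m_0l hm).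
  by move: (han b b0); rewrite hz.
move=> hiso; split; first exact: (rev_dim H hiso).
move=> hd a b hab.
have e0 : e != 0.
  case: hiso => x [x0 _]; apply: contraNneq x0 => e0.
  by case: (he x) => <- _; rewrite e0 (m_0l hm).
by rewrite (dim_comm hm he e0 hd).
Qed.
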